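(* Let $\mathbf{\hat X}=(\hat x_{f,h})\in[0,1]^{F\times H}$. Let $\alpha$ be a set of edges of the complete bipartite graph between $\{1,\dots,F\}$ and $\{1,\dots,H\}$ forming a simple cycle or a simple path, with $\alpha=M_1\cup M_2$ a decomposition into two disjoint matchings (alternate edges). Let $\epsilon_1=\min\{\min_{(f,h)\in M_1}\hat x_{f,h},\ \min_{(f,h)\in M_2}(1-\hat x_{f,h})\}$, $\epsilon_2=\min\{\min_{(f,h)\in M_2}\hat x_{f,h},\ \min_{(f,h)\in M_1}(1-\hat x_{f,h})\}$, and for $\epsilon\in[-\epsilon_1,\epsilon_2]$ define $\mathbf{X}(\epsilon,\alpha)$ by $x_{f,h}(\epsilon,\alpha)=\hat x_{f,h}+\epsilon$ for $(f,h)\in M_1$, $x_{f,h}(\epsilon,\alpha)=\hat x_{f,h}-\epsilon$ for $(f,h)\in M_2$, and $x_{f,h}(\epsilon,\alpha)=\hat x_{f,h}$ otherwise. Then the function $\epsilon\mapsto g(\mathbf{X}(\epsilon,\alpha))$ is convex on $[-\epsilon_1,\epsilon_2]$, where $$g(\mathbf{X})=\sum_{f=1}^F\sum_{u=1}^U P_f\,\widetilde{\omega}_u\Big[1-\prod_{h\in\mathcal{H}(u),\,h\neq0}(1-x_{f,h})\Big].$$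
   Context: Setting: helpers $\{0,1,\dots,H\}$ (helper $0$ is the base station), users $\{1,\dots,U\}$, files $\{1,\dots,F\}$ with probabilities $P_f\ge0$; $\mathcal{H}(u)$ is the set of helpers connected to user $u$ (always containing $0$); $\widetilde{\omega}_u\ge 0$ are given weights (in the paper $\widetilde{\omega}_u=\omega_{0,u}-\omega_1$, where all helper-user links have per-bit delay $\omega_1$ and the base station link to $u$ has delay $\omega_{0,u}>\omega_1$). A matching is a set of edges no two of which share a vertex. The pairs $(\mathbf{\hat X},\alpha)$ considered are exactly those arising as intermediate values in the pipage rounding procedure (where $\alpha$ is a simple cycle or a simple path between degree-one nodes in the subgraph of edges with fractional $\hat x_{f,h}$). *)

(* Defs.v *)
From HB Require Import structures.
From mathcomp Require Import all_boot all_order all_algebra.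
Set Implicit Arguments. Unset Strict Implicit. Unset Printing Implicit Defensive.
Import Order.TTheory GRing.Theory Num.Theory.

(* Files are 'I_F (file f+1), non-base helpers {1..H} are 'I_H (helper h+1).
   Edges of the complete bipartite graph files x helpers: 'I_F * 'I_H. *)
Definition edge (F H : nat) := ('I_F * 'I_H)%type.
Definition vert (F H : nat) := ('I_F + 'I_H)%type.

Definition edge_of (F H : nat) (a b : vert F H) : option (edge F H) :=
  match a, b with
  | inl f, inr h => Some (f, h)
  | inr h, inl f => Some (f, h)
  | _, _ => None
  end.

Definition adjb (F H : nat) (a b : vert F H) : bool := edge_of a b != None.

Definition seq_edges (F H : nat) (s : seq (vert F H)) : seq (edge F H) :=
  pmap (fun p => edge_of p.1 p.2) (zip s (behead s)).

Definition simple_path (F H : nat) (s : seq (vert F H)) : bool :=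
  [&& uniq s, (2 <= size s)%N & sorted (@adjb F H) s].

Definition simple_cycle (F H : nat) (s : seq (vert F H)) : bool :=
  [&& uniq s, (3 <= size s)%N & cycle (@adjb F H) s].

Definition cycle_edges (F H : nat) (s : seq (vert F H)) : seq (edge F H) :=
  match s with
  | [::] => [::]
  | x :: _ => seq_edges (rcons s x)
  end.

Definition path_or_cycle (F H : nat) (alpha : {set edge F H}) : Prop :=
  exists s : seq (vert F H),
    (simple_path s /\ alpha = [set e | e \in seq_edges s]) \/
    (simple_cycle s /\ alpha = [set e | e \in cycle_edges s]).

Definition matching (F H : nat) (M : {set edge F H}) : Prop :=
  forall e1 e2, e1 \in M -> e2 \in M -> e1 != e2 ->
    (e1.1 != e2.1) && (e1.2 != e2.2).

Section G.
Local Open Scope ring_scope.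
Variable R : realFieldType.

(* g(X) = sum_f sum_u P_f w_u [1 - prod_{h in H(u), h<>0} (1 - x_{f,h})],
   where Hu u is the set of non-base helpers connected to u *)
Definition gobj (F H U : nat) (P : 'I_F -> R) (w : 'I_U -> R)
    (Hu : 'I_U -> {set 'I_H}) (x : 'I_F -> 'I_H -> R) : R :=
  \sum_(f < F) \sum_(u < U) P f * w u * (1 - \prod_(h in Hu u) (1 - x f h)).

(* epsilon_1 and epsilon_2; the value 1 is the neutral element used for the
   empty min (harmless: alpha is nonempty and all terms are <= 1) *)
Definition eps1 (F H : nat) (xh : 'I_F -> 'I_H -> R) (M1 M2 : {set edge F H}) : R :=
  Num.min (\big[Num.min/1]_(e in M1) xh e.1 e.2)
          (\big[Num.min/1]_(e in M2) (1 - xh e.1 e.2)).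
Definition eps2 (F H : nat) (xh : 'I_F -> 'I_H -> R) (M1 M2 : {set edge F H}) : R :=
  Num.min (\big[Num.min/1]_(e in M2) xh e.1 e.2)
          (\big[Num.min/1]_(e in M1) (1 - xh e.1 e.2)).

Definition Xeps (F H : nat) (xh : 'I_F -> 'I_H -> R) (M1 M2 : {set edge F H})
    (eps : R) : 'I_F -> 'I_H -> R :=
  fun f h => if (f, h) \in M1 then xh f h + eps
             else if (f, h) \in M2 then xh f h - eps else xh f h.

Definition convex_on (a b : R) (phi : R -> R) : Prop :=
  forall x y t, a <= x <= b -> a <= y <= b -> 0 <= t <= 1 ->
    phi (t * x + (1 - t) * y) <= t * phi x + (1 - t) * phi y.
End G.

(* Main.v *)
Require Import Defs.
From HB Require Import structures.
From mathcomp Require Import all_boot all_order all_algebra.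
From mathcomp Require Import ring.
Import Order.TTheory GRing.Theory Num.Theory.
Local Open Scope ring_scope.

Definition quadconv {R : realFieldType} (phi : R -> R) : Prop :=
  exists c0 c1 c2 : R, 0 <= c2 /\ forall e, phi e = c0 + c1 * e + c2 * (e * e).

Lemma qc_sum (R : realFieldType) (I : Type) (r : seq I) (phi : I -> R -> R) :
  (forall i, quadconv (phi i)) -> quadconv (fun e => \sum_(i <- r) phi i e).
Proof.
move=> Hq; elim: r => [|a r [c0 [c1 [c2 [Hc IH]]]]].
  by exists 0, 0, 0; split => // e; rewrite big_nil; ring.
have [d0 [d1 [d2 [Hd Ha]]]] := Hq a.
exists (d0 + c0), (d1 + c1), (d2 + c2); split; first exact: addr_ge0.
by move=> e; rewrite big_cons Ha IH; ring.
Qed.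

Lemma qc_scale (R : realFieldType) (k : R) (phi : R -> R) :
  0 <= k -> quadconv phi -> quadconv (fun e => k * phi e).
Proof.
move=> Hk [c0 [c1 [c2 [Hc H]]]]; exists (k * c0), (k * c1), (k * c2); split.
  exact: mulr_ge0.
by move=> e; rewrite H; ring.
Qed.

Lemma qc_convex (R : realFieldType) (a b : R) (phi : R -> R) :
  quadconv phi -> convex_on a b phi.
Proof.
move=> [c0 [c1 [c2 [Hc H]]]] x y t _ _ /andP [t0 t1].
rewrite !H -subr_ge0.
have -> : t * (c0 + c1 * x + c2 * (x * x)) + (1 - t) * (c0 + c1 * y + c2 * (y * y)) -
  (c0 + c1 * (t * x + (1 - t) * y) + c2 * ((t * x + (1 - t) * y) * (t * x + (1 - t) * y)))
  = c2 * (t * (1 - t)) * ((x - y) * (x - y)) by ring.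
apply: mulr_ge0; first apply: mulr_ge0 => //; first by apply: mulr_ge0; rewrite // subr_ge0.
by rewrite -expr2 sqr_ge0.
Qed.

Lemma prod_le1 {R : realFieldType} {I : finType} (P : pred I) (a : I -> R) (s : R) :
  (forall h1 h2, P h1 -> P h2 -> h1 = h2) ->
  exists p q, (q = 0 \/ q = s) /\ forall e, \prod_(h | P h) (a h + s * e) = p + q * e.
Proof.
move=> Hu; case: (pickP P) => [h1 Ph1 | P0].
  exists (a h1), s; split; first by right.
  move=> e; rewrite (bigD1 h1) //= big1 ?mulr1 // => h /andP [Ph nh].
  by rewrite (Hu _ _ Ph Ph1) eqxx in nh.
exists 1, 0; split; first by left.
by move=> e; rewrite big_pred0 // mul0r addr0.
Qed.

Theorem mainTheorem5 (R : realFieldType) (F H U : nat)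
    (P : 'I_F -> R) (w : 'I_U -> R) (Hu : 'I_U -> {set 'I_H})
    (xh : 'I_F -> 'I_H -> R) (alpha M1 M2 : {set edge F H}) :
  (forall f, 0 <= P f) ->
  (forall u, 0 <= w u) ->
  (forall f h, 0 <= xh f h <= 1) ->
  path_or_cycle alpha ->
  alpha = M1 :|: M2 ->
  [disjoint M1 & M2] ->
  matching M1 -> matching M2 ->
  convex_on (- eps1 xh M1 M2) (eps2 xh M1 M2)
    (fun eps => gobj P w Hu (Xeps xh M1 M2 eps)).
Proof.
move=> HP Hw Hx _ _ _ Hm1 Hm2; apply: qc_convex; rewrite /gobj.
apply: qc_sum => f; apply: qc_sum => u; apply: qc_scale.
  exact: mulr_ge0.
have uniqM (M : {set edge F H}) : matching M -> forall h1 h2,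
    (h1 \in Hu u) && ((f, h1) \in M) -> (h2 \in Hu u) && ((f, h2) \in M) -> h1 = h2.
  move=> Hm h1 h2 /andP [_ i1] /andP [_ i2].
  case: (eqVneq (f, h1) (f, h2)) => [[]//|ne].
  by have := Hm _ _ i1 i2 ne; rewrite /= eqxx.
pose K := \prod_(h | (h \in Hu u) && ((f, h) \notin M1) && ((f, h) \notin M2)) (1 - xh f h).
have K0 : 0 <= K by apply: prodr_ge0 => h _; rewrite subr_ge0; case/andP: (Hx f h).
have E e : \prod_(h in Hu u) (1 - Xeps xh M1 M2 e f h) =
  (\prod_(h | (h \in Hu u) && ((f, h) \in M1)) ((1 - xh f h) + (-1) * e)) *
  ((\prod_(h | (h \in Hu u) && ((f, h) \notin M1) && ((f, h) \in M2)) ((1 - xh f h) + 1 * e)) * K).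
  rewrite /Xeps (bigID (fun h => (f, h) \in M1)) /=; congr (_ * _).
    by apply: eq_bigr => h /andP [_ ->]; ring.
  rewrite (bigID (fun h => (f, h) \in M2)) /=; congr (_ * _).
    by apply: eq_bigr => h /andP [/andP [_ /negbTE ->] ->]; ring.
  by apply: eq_bigr => h /andP [/andP [_ /negbTE ->] /negbTE ->].
have [p1 [q1 [Hq1 E1]]] := prod_le1 _ (fun h => 1 - xh f h) (-1) (uniqM _ Hm1).
have U2 : forall h1 h2,
    (h1 \in Hu u) && ((f, h1) \notin M1) && ((f, h1) \in M2) ->
    (h2 \in Hu u) && ((f, h2) \notin M1) && ((f, h2) \in M2) -> h1 = h2.
  move=> h1 h2 /andP [/andP [a _] b] /andP [/andP [c _] d].
  by apply: (uniqM _ Hm2); rewrite ?a ?b ?c ?d.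
have [p2 [q2 [Hq2 E2]]] := prod_le1 _ (fun h => 1 - xh f h) 1 U2.
exists (1 - p1 * p2 * K), (- (p1 * q2 + q1 * p2) * K), (- (q1 * q2 * K)); split.
  case: Hq1 => ->; first by rewrite !mul0r oppr0.
  case: Hq2 => ->; first by rewrite mulr0 mul0r oppr0.
  have -> : - (-1 * 1 * K) = K by ring.
  exact: K0.
by move=> e; rewrite E E1 E2; ring.
Qed.
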